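(* Let $\alpha,\beta,\gamma>0$ with $\gamma<1/5$, $\delta<1/2$, and $x_0,y\in\mathcal D(\delta)$ with $\|x_0-y\|\le\frac45r_\delta$ lying on different sides of a barrier $B_i$, $i\ge1$. Let $X$ be the snapping-out Brownian motion with $X_0=x_0$ (driven by $W$ and $s_1,\dots,s_m$), and suppose the event $$\mathcal A:=\Big\{\mathcal E_1<\alpha r_\delta,\ \mathcal E_2>\beta r_\delta,\ \|W_t-(t/r_\delta^2)(y-x_0)\|\le\gamma r_\delta\ \forall t\le r_\delta^2\Big\}$$ occurs. Then for every $t\le r_\delta^2$ with $L^{(i)}_t<(1/5-\gamma)r_\delta$ one has $X_t\in\mathsf B(x_0,r_\delta)$.
   Context: Setting. $D\subseteq\mathbb R^2$ is the closure of a bounded open set $D_0$; $D$ is connected and simply connected, with $C^\infty$ boundary $B_0:=\partial D$, a simple closed curve. $B_1,\dots,B_m\subseteq D_0$ are $C^\infty$ simple closed curves with $B_i\cap B_j=\emptyset$ for $i\neq j$ ($0\le i,j\le m$). For each $i$, the positive side of $B_i$ is the closure of the bounded component of $\mathbb R^2\setminus B_i$, the negative side the closure of the unbounded component (points of $B_i$ lie on both sides); $\vec n_i$ is the unit normal field on $B_i$ pointing into the bounded component. Fix $\lambda_i^\pm>0$. Let $W_t$ be a standard planar Wiener process and, independently, $s_1,\dots,s_m$ independent càdlàg Markov chains on $\{-1,+1\}$, $s_i$ jumping from $-1$ to $+1$ at rate $\lambda_i^+$ and from $+1$ to $-1$ at rate $\lambda_i^-$; $s_0\equiv+1$. A snapping-out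 Brownian motion is a family of continuous processes $X_t\in D$, $L^{(i)}_t\ge0$ such that a.s.: (i) $dX_t=dW_t+\sum_{i=0}^m s_i(L^{(i)}_t)\vec n_i(X_t)\mathbf 1\{X_t\in B_i\}dL^{(i)}_t$; (ii) $L^{(i)}$ nondecreasing, $L^{(i)}_0=0$, $L^{(i)}_t=\int_0^t\mathbf 1\{X_r\in B_i\}dL^{(i)}_r$; (iii) $s_i(L^{(i)}_t)=+1$ (resp. $-1$) implies $X_t$ is on the positive (resp. negative) side of $B_i$. Here $s_i(0)$ is $+1$ if $x_0$ is on the positive side of $B_i$ and $-1$ otherwise. Parameters: $\lambda_{\max}=\max\lambda_j^\pm$; $\kappa$ maximal unsigned curvature of $B_0,\dots,B_m$; $\rho:=\sup\{r\ge0:\mathsf B(x,r')\cap\bigcup_jB_j\text{ connected }\forall r'\le r,\ x\in D\}$ ($\mathsf B$ = open ball); $r_\delta:=\delta\min\{1/\kappa,1/\lambda_{\max},\rho\}$; $\mathcal D(\delta):=\{x\in D:\|x-z\|\ge r_\delta/5\ \forall z\in\bigcup_jB_j\}$. Also $\mathcal E_1:=\inf\{t\ge0:s_i(t)\ne s_i(0)\}$ and $\mathcal E_2:=\inf\{t\ge\mathcal E_1:s_i(t)\ne s_i(\mathcal E_1)\}-\mathcal E_1$. *)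

(* Defs.v *)
From HB Require Import structures.
From mathcomp Require Import all_boot all_order all_algebra.
From mathcomp Require Import all_classical all_reals all_analysis.
Set Implicit Arguments. Unset Strict Implicit. Unset Printing Implicit Defensive.
Import Order.TTheory GRing.Theory Num.Theory.
Import numFieldNormedType.Exports.
Local Open Scope classical_set_scope.
Local Open Scope ring_scope.

Section Plane.
Variable R : realType.

(* Points of the plane R^2 are pairs; we use the Euclidean norm explicitly
   (the library norm on pairs is the max norm). The topology on R*R is the
   product topology, i.e. the usual topology of R^2. *)
Definition padd (x y : R * R) : R * R := (x.1 + y.1, x.2 + y.2).
Definition psub (x y : R * R) : R * R := (x.1 - y.1, x.2 - y.2).
Definition pscale (a : R) (x : R * R) : R * R := (a * x.1, a * x.2).
Definition dot (x y : R * R) : R := x.1 * y.1 + x.2 * y.2.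
Definition enorm (x : R * R) : R := Num.sqrt (dot x x).

Definition eball (x : R * R) (r : R) : set (R * R) :=
  [set z | enorm (psub z x) < r].

Definition smooth_fun (f : R -> R) : Prop :=
  forall (k : nat) (t : R), derivable (derive1n k f) t 1.

Definition vel (c : R -> R * R) (t : R) : R * R :=
  (derive1 (fun u => (c u).1) t, derive1 (fun u => (c u).2) t).
Definition acc (c : R -> R * R) (t : R) : R * R :=
  (derive1n 2 (fun u => (c u).1) t, derive1n 2 (fun u => (c u).2) t).

(* c is a regular C^infinity parametrization, of period 1 and injective on
   [0,1), of a simple closed curve (the curve is the set  range c). *)
Definition smooth_simple_closed_curve (c : R -> R * R) : Prop :=
  [/\ smooth_fun (fun u => (c u).1), smooth_fun (fun u => (c u).2),
      (forall t, c (t + 1) = c t),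
      (forall s t, 0 <= s < 1 -> 0 <= t < 1 -> c s = c t -> s = t) &
      (forall t, vel c t != (0, 0))].

Definition curvature (c : R -> R * R) (t : R) : R :=
  `| (vel c t).1 * (acc c t).2 - (vel c t).2 * (acc c t).1 |
  / (Num.sqrt (dot (vel c t) (vel c t))) ^+ 3.

Definition in_bounded_comp (B : set (R * R)) : set (R * R) :=
  [set x | ~ B x /\ bounded_set (connected_component (~` B) x)].
Definition in_unbounded_comp (B : set (R * R)) : set (R * R) :=
  [set x | ~ B x /\ ~ bounded_set (connected_component (~` B) x)].

Definition pos_side (B : set (R * R)) : set (R * R) :=
  closure (in_bounded_comp B).
Definition neg_side (B : set (R * R)) : set (R * R) :=
  closure (in_unbounded_comp B).

Definition simply_connected (D : set (R * R)) : Prop :=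
  forall g : R -> R * R,
    {within `[0, 1], continuous g} -> (forall s, 0 <= s <= 1 -> D (g s)) ->
    g 0 = g 1 ->
    exists H : R * R -> R * R,
      [/\ {within `[0, 1] `*` `[0, 1], continuous H},
          (forall s u, 0 <= s <= 1 -> 0 <= u <= 1 -> D (H (s, u))),
          (forall s, 0 <= s <= 1 -> H (s, 0) = g s),
          (forall s, 0 <= s <= 1 -> H (s, 1) = g 0) &
          (forall u, 0 <= u <= 1 -> H (0, u) = g 0 /\ H (1, u) = g 0)].

Definition ind (A : set (R * R)) (x : R * R) : R :=
  if `[< A x >] then 1 else 0.

End Plane.

Section Params.
Variables (R : realType) (m : nat) (c : 'I_m.+1 -> R -> R * R).

Definition all_barriers : set (R * R) := \bigcup_(j in setT) range (c j).

Definition kappa : R := sup [set curvature (c j) t | j in setT & t in setT].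

Definition rho (D : set (R * R)) : R :=
  sup [set r | 0 <= r /\ forall r' x, r' <= r -> D x ->
               connected (eball x r' `&` all_barriers)].

Definition lambda_max (lp lm : 'I_m.+1 -> R) : R :=
  \big[Num.max/0]_(j < m.+1 | j != ord0) Num.max (lp j) (lm j).

Definition r_delta (D : set (R * R)) (lp lm : 'I_m.+1 -> R) (delta : R) : R :=
  delta * Num.min (kappa^-1) (Num.min ((lambda_max lp lm)^-1) (rho D)).

Definition calD (D : set (R * R)) (lp lm : 'I_m.+1 -> R) (delta : R)
  : set (R * R) :=
  [set x | D x /\ forall z, all_barriers z ->
     r_delta D lp lm delta / 5 <= enorm (psub x z)].

End Params.

Section Switch.
Variable R : realType.
Local Open Scope ereal_scope.
(* first switching time E_1 and the next holding time E_2 of the path s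
   (as extended reals: +oo if there is no such switch) *)
Definition E1 (s : R -> R) : \bar R :=
  ereal_inf [set t%:E | t in [set t : R | (0 <= t)%R /\ s t <> s 0%R]].
Definition E2 (s : R -> R) : \bar R :=
  ereal_inf [set t%:E | t in [set t : R | E1 s <= t%:E /\ s t <> s (fine (E1 s))]]
  - E1 s.
End Switch.

(* Main.v *)
Require Import Defs.
From HB Require Import structures.
From mathcomp Require Import all_boot all_order all_algebra.
From mathcomp Require Import all_classical all_reals all_analysis.
From mathcomp Require Import ring lra.
Import Order.TTheory GRing.Theory Num.Theory.
Import numFieldNormedType.Exports.
Local Open Scope classical_set_scope.
Local Open Scope ring_scope.

Set Implicit Arguments. Unset Strict Implicit. Unset Printing Implicit Defensive.

Lemma sqrt_le (R : realType) (a M : R) : 0 <= M -> a <= M ^+ 2 -> Num.sqrt a <= M.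
Proof.
move=> M0 aM; apply: (le_trans (_ : _ <= Num.sqrt (M ^+ 2))).
  by rewrite ler_sqrt // sqr_ge0.
by rewrite sqrtr_sqr ger0_norm.
Qed.

Lemma sqrt_lt (R : realType) (a M : R) : 0 < M -> a < M ^+ 2 -> Num.sqrt a < M.
Proof.
move=> M0 aM; apply: (lt_le_trans (_ : _ < Num.sqrt (M ^+ 2))).
  by rewrite ltr_sqrt //; nra.
by rewrite sqrtr_sqr ger0_norm // ltW.
Qed.

Lemma dot_ge0 (R : realType) (v : R * R) : 0 <= dot v v.
Proof. rewrite /dot; nra. Qed.

Lemma enorm_ge0 (R : realType) (v : R * R) : 0 <= enorm v.
Proof. exact: sqrtr_ge0. Qed.

Lemma enorm_sq (R : realType) (v : R * R) : enorm v ^+ 2 = dot v v.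
Proof. by rewrite sqr_sqrtr // dot_ge0. Qed.

Lemma enorm_scale (R : realType) (k : R) (v : R * R) :
  enorm (pscale k v) = `|k| * enorm v.
Proof.
rewrite /enorm /dot /pscale /= -sqrtr_sqr -sqrtrM ?sqr_ge0 //; congr Num.sqrt; ring.
Qed.

Lemma CS (R : realType) (u v : R * R) : dot u v <= enorm u * enorm v.
Proof.
have h0 := enorm_ge0 u; have h1 := enorm_ge0 v.
have [le0|gt0] := leP (dot u v) 0; first by apply: (le_trans le0); nra.
rewrite -(ler_pXn2r (n:=2)) // ?nnegrE ?(ltW gt0) ?mulr_ge0 //.
rewrite exprMn !enorm_sq /dot.
have := sqr_ge0 (u.1 * v.2 - u.2 * v.1); rewrite !expr2; nra.
Qed.

Lemma enorm_triangle (R : realType) (u v : R * R) :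
  enorm (padd u v) <= enorm u + enorm v.
Proof.
apply: sqrt_le; first by rewrite addr_ge0 // enorm_ge0.
have := CS u v; rewrite sqrrD !enorm_sq /dot /padd /=; nra.
Qed.

Lemma enorm_eq0 (R : realType) (v : R * R) : enorm v = 0 -> v = (0, 0).
Proof.
case: v => a b h; have := enorm_sq (a, b); rewrite h expr0n /= /dot /= => /esym e.
congr pair; nra.
Qed.

Lemma enorm_psubC (R : realType) (u v : R * R) : enorm (psub u v) = enorm (psub v u).
Proof. rewrite /enorm /dot /psub /=; congr Num.sqrt; ring. Qed.

Lemma enorm_small (R : realType) (v : R * R) (e : R) : 0 < e ->
  `|v.1| < e / 2 -> `|v.2| < e / 2 -> enorm v < e.
Proof.
move=> e0 h1 h2; apply: sqrt_lt => //.
rewrite /dot; have a1 : v.1 * v.1 = `|v.1| ^+ 2 by rewrite real_normK ?num_real // expr2.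
have a2 : v.2 * v.2 = `|v.2| ^+ 2 by rewrite real_normK ?num_real // expr2.
rewrite a1 a2; have := normr_ge0 v.1; have := normr_ge0 v.2; nra.
Qed.

Lemma enorm_comp1 (R : realType) (v : R * R) : `|v.1| <= enorm v.
Proof.
rewrite -(ler_pXn2r (n:=2)) // ?nnegrE ?enorm_ge0 // enorm_sq.
rewrite real_normK ?num_real // /dot; nra.
Qed.

Lemma eball_nbhs (R : realType) (a : R * R) (e : R) : 0 < e -> nbhs a (eball a e).
Proof.
move=> e0; exists (ball a.1 (e / 2), ball a.2 (e / 2)) => /=.
  by split; apply: nbhsx_ballx; rewrite divr_gt0.
case=> z1 z2 [/= h1 h2]; rewrite /eball /=; apply: enorm_small => //=.
  by rewrite distrC.
by rewrite distrC.
Qed.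

Definition seg (R : realType) (a b : R * R) (l : R) : R * R :=
  padd a (pscale l (psub b a)).

Lemma seg_cont (R : realType) (a b : R * R) : continuous (seg a b).
Proof.
have -> : seg a b = fun l => (a.1 + l * (b.1 - a.1), a.2 + l * (b.2 - a.2)).
  by apply: funext => l.
move=> l; apply: (@cvg_pair _ _ _ _ (nbhs (a.1 + l * (b.1 - a.1))) (nbhs (a.2 + l * (b.2 - a.2)))) => /=.
  by apply: cvgD; [exact: cvg_cst | apply: cvgM; [exact: cvg_id | exact: cvg_cst]].
by apply: cvgD; [exact: cvg_cst | apply: cvgM; [exact: cvg_id | exact: cvg_cst]].
Qed.

Lemma seg0 (R : realType) (a b : R * R) : seg a b 0 = a.
Proof. by case: a => a1 a2; rewrite /seg /padd /pscale /=; congr pair; ring. Qed.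

Lemma seg1 (R : realType) (a b : R * R) : seg a b 1 = b.
Proof. by case: a => a1 a2; case: b => b1 b2; rewrite /seg /padd /pscale /psub /=; congr pair; ring. Qed.

Lemma seg_dist (R : realType) (a b : R * R) l :
  psub (seg a b l) a = pscale l (psub b a).
Proof. by case: a => a1 a2; case: b => b1 b2; rewrite /seg /padd /pscale /psub /=; congr pair; ring. Qed.

Lemma seg_dist2 (R : realType) (a b : R * R) l :
  psub (seg a b l) b = pscale (1 - l) (psub a b).
Proof. by case: a => a1 a2; case: b => b1 b2; rewrite /seg /padd /pscale /psub /=; congr pair; ring. Qed.

Lemma seg_connected (R : realType) (a b : R * R) :
  connected [set seg a b l | l in `[(0:R), 1]].
Proof.
apply: connected_continuous_connected.
  by apply/connected_intervalP; exact: interval_is_interval.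
exact/continuous_subspaceT/seg_cont.
Qed.

Lemma seg_comp (R : realType) (B : set (R * R)) (a b : R * R) :
  (forall l, 0 <= l <= 1 -> ~ B (seg a b l)) -> connected_component (~` B) a b.
Proof.
move=> h.
have sub : [set seg a b l | l in `[(0:R), 1]] `<=` ~` B.
  by move=> _ [l /= l01 <-]; apply: h; rewrite in_itv /= in l01.
have ha : [set seg a b l | l in `[(0:R), 1]] a.
  by exists 0; [rewrite /= in_itv /= lexx ler01 | exact: seg0].
have hb : [set seg a b l | l in `[(0:R), 1]] b.
  by exists 1; [rewrite /= in_itv /= lexx ler01 | exact: seg1].
exact: (connected_component_max ha sub (@seg_connected R a b) hb).
Qed.

Lemma enorm_psub0 (R : realType) (a : R * R) : enorm (psub a a) = 0.
Proof. by rewrite /enorm /dot /psub /= !subrr mulr0 addr0 sqrtr0. Qed.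

Lemma far_notin (R : realType) (B : set (R * R)) (a : R * R) (e : R) : 0 < e ->
  (forall z, B z -> e <= enorm (psub a z)) -> ~ B a.
Proof. by move=> e0 h /h; rewrite enorm_psub0; apply/negP; rewrite -ltNge. Qed.

Lemma pos_bounded (R : realType) (B : set (R * R)) (a : R * R) (e : R) : 0 < e ->
  (forall z, B z -> e <= enorm (psub a z)) -> pos_side B a ->
  bounded_set (connected_component (~` B) a).
Proof.
move=> e0 far hp.
have [z [[nBz bz] az]] := hp _ (eball_nbhs a e0).
have caz : connected_component (~` B) a z.
  apply: seg_comp => l /andP[l0 l1] Bl.
  have := far _ Bl; rewrite enorm_psubC seg_dist enorm_scale ger0_norm //.
  apply/negP; rewrite -ltNge; move: az; rewrite /eball /= => az.
  have := enorm_ge0 (psub z a); nra.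
by rewrite (same_connected_component caz).
Qed.

Lemma crossing (R : realType) (B : set (R * R)) (a b : R * R) (e : R) : 0 < e ->
  (forall z, B z -> e <= enorm (psub a z)) ->
  (forall z, B z -> e <= enorm (psub b z)) ->
  pos_side B a -> ~ pos_side B b -> exists l, 0 <= l <= 1 /\ B (seg a b l).
Proof.
move=> e0 fa fb pa npb.
have [//|nex] := pselect (exists l, 0 <= l <= 1 /\ B (seg a b l)).
have cab : connected_component (~` B) a b.
  by apply: seg_comp => l l01 Bl; apply: nex; exists l.
exfalso; apply: npb; apply: subset_closure; split; first exact: (far_notin e0 fb).
rewrite -(same_connected_component cab); exact: (pos_bounded e0 fa pa).
Qed.

Lemma smooth_cont (R : realType) (f : R -> R) : smooth_fun f -> continuous f.
Proof.
move=> h t; apply: differentiable_continuous; apply/derivable1_diffP.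
exact: (h 0%N t).
Qed.

Lemma curve_cont (R : realType) (c : R -> R * R) :
  smooth_simple_closed_curve c -> continuous c.
Proof.
case=> h1 h2 _ _ _ t.
have -> : c = fun u => ((c u).1, (c u).2) by apply: funext => u; case: (c u).
apply: (@cvg_pair _ _ _ _ (nbhs (c t).1) (nbhs (c t).2)).
  exact: smooth_cont.
exact: smooth_cont.
Qed.

Lemma per_nat (R : realType) (c : R -> R * R) : (forall t, c (t + 1) = c t) ->
  forall (n : nat) t, c (t + n%:R) = c t.
Proof.
move=> hp; elim=> [|n IH] t; first by rewrite addr0.
by rewrite -addn1 natrD addrA hp IH.
Qed.

Lemma per_int (R : realType) (c : R -> R * R) : (forall t, c (t + 1) = c t) ->
  forall (k : int) t, c (t - k%:~R) = c t.
Proof.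
move=> hp k t; case: k => n.
  by rewrite -[in RHS](subrK (n%:R) t) per_nat.
by rewrite NegzE mulrNz opprK -pmulrn per_nat.
Qed.

Lemma range_itv (R : realType) (c : R -> R * R) : (forall t, c (t + 1) = c t) ->
  range c = c @` `[(0:R), 1].
Proof.
move=> hp; apply/seteqP; split => _ [t _ <-]; last by exists t.
set k := Num.floor t.
have /andP[h1 h2] := floor_itv t.
rewrite intrD in h2.
exists (t - k%:~R); last exact: per_int.
rewrite /= in_itv /=; apply/andP; split; lra.
Qed.

Lemma range_closed (R : realType) (c : R -> R * R) :
  smooth_simple_closed_curve c -> closed (range c).
Proof.
move=> hc; have cc := curve_cont hc; case: hc => _ _ hp _ _.
rewrite (range_itv hp); apply: compact_closed.
  exact: norm_hausdorff.
apply: continuous_compact; last exact: segment_compact.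
exact: continuous_subspaceT.
Qed.

Lemma conn_in_one (R : realType) (n : nat) (F : 'I_n -> set (R * R))
  (K : set (R * R)) (i : 'I_n) :
  connected K -> K `<=` \bigcup_(j in setT) F j -> (forall j, closed (F j)) ->
  (forall j k, j != k -> F j `&` F k = set0) -> (exists p, K p /\ F i p) ->
  K `<=` F i.
Proof.
move=> cK sub cl dis [p [Kp Fp]].
set G := \bigcup_(j in [set j | j != i]) F j.
have cG : closed G.
  by apply: closed_bigcup => //; exact: finite_finset.
have e : K `&` F i = K.
  apply: cK.
  - by exists p.
  - exists (~` G); first by rewrite openC.
    apply/seteqP; split => z [Kz Fz]; split => //.
      move=> [j /= ji Fjz]; have := dis j i ji.
      by move/seteqP => [+ _] => /(_ z) /=; apply.
    have [j _ Fjz] := sub z Kz.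
    have [ji|ji] := eqVneq j i; first by rewrite -ji.
    by exfalso; apply: Fz; exists j.
  - by exists (F i).
by move=> z Kz; rewrite -e in Kz; case: Kz.
Qed.

Lemma rc_eps (R : realType) (s : R -> R) v : s x @[x --> v^'+] --> s v ->
  exists2 e : R, 0 < e & forall x, v < x < v + e -> `|s v - s x| < 1.
Proof.
move=> h.
have N : \forall x \near v^'+, `|s v - s x| < 1.
  by move/cvgr_dist_lt : h; apply.
move: N; rewrite /at_right /within /=.
move=> /nbhs_ballP [e /= e0 he].
exists e => // x /andP[vx xe]; apply: he => //.
rewrite /ball /= ltr_norml; apply/andP; split; lra.
Qed.

Lemma rc_rat (R : realType) (s : R -> R) v :
  (forall v, 0 <= v -> s v = 1 \/ s v = -1) ->
  (forall v, 0 <= v -> s x @[x --> v^'+] --> s v) ->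
  0 <= v -> s v = 1 ->
  exists q : rat, v <= ratr q /\ forall w, v <= w <= ratr q -> s w = 1.
Proof.
move=> hval hrc v0 sv.
have [e e0 he] := rc_eps (hrc v v0).
have ve : v < v + e by rewrite ltrDl.
have [q] := rat_in_itvoo ve.
rewrite in_itv /= => /andP[vq qe].
exists q; split; first exact: ltW.
move=> w /andP[vw wq].
have [<-//|vw'] := eqVneq v w.
have vw2 : v < w by rewrite lt_neqAle vw' vw.
have := he w; rewrite vw2 /= (le_lt_trans wq qe) => /(_ isT).
rewrite sv; have [->//|->] := hval w (le_trans v0 vw).
rewrite opprK ger0_norm; lra.
Qed.
Lemma comp_within_cont (R : realType) (X : R -> R * R) (B : set (R * R))
  (n : R * R -> R * R) (p : R * R -> R) :
  continuous X -> continuous p -> {within B, continuous n} ->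
  {within X @^-1` B, continuous (fun u => p (n (X u)))}.
Proof.
move=> hX hp hn.
rewrite continuous_subspace_in => u /set_mem Eu.
change ((fun u0 => p (n (X u0))) @ nbhs_subspace (u : subspace (X @^-1` B)) --> p (n (X u))).
rewrite -(nbhs_subspace_in Eu).
have hn' : n @ within B (nbhs (X u)) --> n (X u).
  move: hn; rewrite continuous_subspace_in => /(_ (X u)).
  have EB : B (X u) := Eu.
  rewrite inE => /(_ EB) h.
  change (n @ nbhs_subspace (X u : subspace B) --> n (X u)) in h.
  by rewrite -(nbhs_subspace_in EB) in h.
have hX' : X @ within (X @^-1` B) (nbhs u) --> within B (nbhs (X u)).
  move=> P /= hP; rewrite /within /=.
  have h : nbhs u (X @^-1` (fun z => B z -> P z)) by apply: hX.
  by apply: filterS h => v /= Pv Bv; apply: Pv.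
apply: (cvg_comp _ _ (cvg_comp _ _ hX' hn')).
exact: hp.
Qed.

Lemma k_meas (R : realType) (X : R -> R * R) (B : set (R * R))
  (n : R * R -> R * R) (p : R * R -> R) (D : set R) :
  measurable D -> continuous X -> closed B -> continuous p ->
  {within B, continuous n} ->
  measurable_fun D (fun u => ind B (X u) * p (n (X u))).
Proof.
move=> mD hX cB hp hn.
have mE : measurable (X @^-1` B).
  by apply: measurable_realfun.closed_measurable; move/continuous_closedP : hX; apply.
have mh := measurable_realfun.subspace_continuous_measurable_fun mE (comp_within_cont hX hp hn).
have mh2 : measurable_fun (D `&` (X @^-1` B)) (fun u => p (n (X u))).
  exact: measurable_funS mE (@subIsetr _ _ _) mh.
have := (measurable_restrict _ mE mD).1 mh2.
apply: eq_measurable_fun => u _.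
rewrite /patch /ind; case: ifPn => [/set_mem Eu|/negP nEu].
  by case: asboolP => // _; rewrite mul1r.
case: asboolP => [Bu|_]; last by rewrite mul0r.
by exfalso; apply: nEu; apply/mem_set.
Qed.

Lemma sL_set_meas (R : realType) (s L : R -> R) (D : set R) :
  is_interval D ->
  (forall u, D u -> 0 <= L u) ->
  (forall u v, D u -> D v -> u <= v -> L u <= L v) ->
  (forall v, 0 <= v -> s v = 1 \/ s v = -1) ->
  (forall v, 0 <= v -> s x @[x --> v^'+] --> s v) ->
  measurable [set u | D u /\ s (L u) = 1].
Proof.
move=> iD L0 Lmono hval hrc.
pose C := fun q : rat => [set u | D u /\ 0 <= L u /\ L u <= ratr q /\
  forall w, L u <= w <= ratr q -> s w = 1].
have -> : [set u | D u /\ s (L u) = 1] = \bigcup_q C q.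
  apply/seteqP; split => u.
    move=> [Du su]; have [q [h1 h2]] := rc_rat hval hrc (L0 u Du) su.
    by exists q => //; split => //; split; [exact: L0|split].
  move=> [q _ [Du [h0 [h1 h2]]]]; split => //; apply: h2.
  by rewrite lexx h1.
apply: bigcupT_measurable_rat => q; apply: measurable_realfun.is_interval_measurable.
move=> x y [Dx [x0 [xq xs]]] [Dy [y0 [yq ys]]] z /andP[xz zy].
have Dz : D z by apply: (iD x y) => //; rewrite xz zy.
have Lxz := Lmono _ _ Dx Dz xz; have Lzy := Lmono _ _ Dz Dy zy.
split => //; split; first exact: (le_trans x0).
split; first exact: (le_trans Lzy).
move=> w /andP[zw wq]; apply: xs; rewrite wq (le_trans Lxz) //.
Qed.

Lemma sL_meas (R : realType) (s L : R -> R) (D : set R) :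
  measurable D -> is_interval D ->
  (forall u, D u -> 0 <= L u) ->
  (forall u v, D u -> D v -> u <= v -> L u <= L v) ->
  (forall v, 0 <= v -> s v = 1 \/ s v = -1) ->
  (forall v, 0 <= v -> s x @[x --> v^'+] --> s v) ->
  measurable_fun D (fun u => s (L u)).
Proof.
move=> mD iD L0 Lmono hval hrc.
have mA := sL_set_meas iD L0 Lmono hval hrc.
set A := [set u | D u /\ s (L u) = 1] in mA.
have m1 : measurable_fun D (\1_A : R -> R) := measurable_realfun.measurable_indic mA.
have m2 := measurable_realfun.measurable_funD m1 (measurable_realfun.measurable_funD m1 (@measurable_cst _ _ _ _ D (-1 : R))).
apply: eq_measurable_fun m2 => u /set_mem Du.
rewrite /indic /=; case: (boolP (u \in A)) => [/set_mem [_ ->]|/negP uA].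
  rewrite /=; lra.
have [h|h] := hval _ (L0 u Du).
  by exfalso; apply: uA; apply/mem_set.
rewrite h /=; lra.
Qed.

Lemma bnd_int (R : realType) (mu : {measure set R -> \bar R}) (D : set R)
  (g : R -> R) (K : R) :
  measurable D -> (mu D < +oo)%E -> measurable_fun D g ->
  (forall u, D u -> `|g u| <= K) -> mu.-integrable D (EFin \o g).
Proof.
move=> mD muD mg hK; apply: measurable_bounded_integrable => //.
rewrite /bounded_near; near=> M => u Du /=; apply: (le_trans (hK u Du)).
near: M; apply: nbhs_pinfty_ge; exact: num_real.
Unshelve. all: by end_near.
Qed.

Lemma int_bound (R : realType) (mu : {measure set R -> \bar R}) (D : set R)
  (f1 f2 : R -> R) (M : R) :
  measurable D -> mu D = M%:E -> measurable_fun D f1 -> measurable_fun D f2 ->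
  (forall u, D u -> enorm (f1 u, f2 u) <= 1) ->
  enorm (\int[mu]_(u in D) f1 u, \int[mu]_(u in D) f2 u) <= M.
Proof.
move=> mD muD m1 m2 hb.
have M0 : 0 <= M by rewrite -lee_fin -muD measure_ge0.
have muD' : (mu D < +oo)%E by rewrite muD ltry.
have b1 : forall u, D u -> `|f1 u| <= 1.
  by move=> u Du; apply: le_trans (hb u Du); exact: (enorm_comp1 (f1 u, f2 u)).
have b2 : forall u, D u -> `|f2 u| <= 1.
  move=> u Du; apply: le_trans (hb u Du).
  have := enorm_comp1 (f2 u, f1 u); rewrite /enorm /dot /= addrC //.
have i1 := bnd_int mD muD' m1 b1.
have i2 := bnd_int mD muD' m2 b2.
set I1 := \int[mu]_(u in D) f1 u; set I2 := \int[mu]_(u in D) f2 u.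
set v := (I1, I2).
have ic := bnd_int (g := fun=> enorm v) (K := `|enorm v|) mD muD' (measurable_cst _) (fun _ _ => lexx _).
have mc : measurable_fun D (fun u => I1 * f1 u + I2 * f2 u).
  apply: measurable_realfun.measurable_funD.
    exact: measurable_realfun.measurable_funM (measurable_cst _) m1.
  exact: measurable_realfun.measurable_funM (measurable_cst _) m2.
have ib : forall u, D u -> `|I1 * f1 u + I2 * f2 u| <= `|I1| + `|I2|.
  move=> u Du; apply: (le_trans (ler_normD _ _)); rewrite !normrM.
  apply: lerD; rewrite -[X in _ <= X]mulr1; apply: ler_wpM2l => //; [exact: b1|exact: b2].
have icomb := bnd_int mD muD' mc ib.
have key : enorm v ^+ 2 = \int[mu]_(u in D) (I1 * f1 u + I2 * f2 u).
  have j1 : mu.-integrable D (EFin \o (fun u => I1 * f1 u)).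
    apply: (bnd_int (K := `|I1|) mD muD').
      exact: measurable_realfun.measurable_funM (measurable_cst _) m1.
    move=> u Du; rewrite normrM -[X in _ <= X]mulr1 ler_wpM2l //; exact: b1.
  have j2 : mu.-integrable D (EFin \o (fun u => I2 * f2 u)).
    apply: (bnd_int (K := `|I2|) mD muD').
      exact: measurable_realfun.measurable_funM (measurable_cst _) m2.
    move=> u Du; rewrite normrM -[X in _ <= X]mulr1 ler_wpM2l //; exact: b2.
  rewrite (RintegralD mD j1 j2).
  by rewrite !RintegralZl // enorm_sq /dot.
have le : \int[mu]_(u in D) (I1 * f1 u + I2 * f2 u) <= \int[mu]_(u in D) enorm v.
  apply: le_Rintegral => // u Du.
  apply: (le_trans (CS v (f1 u, f2 u))); rewrite -[X in _ <= X]mulr1.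
  by apply: ler_wpM2l; [exact: enorm_ge0 | exact: hb].
rewrite Rintegral_cst // muD /= -key in le.
have := enorm_ge0 v; nra.
Qed.

Lemma phi_cont (R : realType) (X : R -> R * R) (a : R * R) :
  continuous X -> continuous (fun u => enorm (psub (X u) a)).
Proof.
move=> hX u.
have c1 : (fun v => (X v).1) @ u --> (X u).1.
  exact: (cvg_comp _ _ (hX u) (@cvg_fst _ _ (nbhs (X u).1) (nbhs (X u).2) _)).
have c2 : (fun v => (X v).2) @ u --> (X u).2.
  exact: (cvg_comp _ _ (hX u) (@cvg_snd _ _ (nbhs (X u).1) (nbhs (X u).2) _)).
rewrite /enorm /dot /psub /=.
have inner : (fun v => ((X v).1 - a.1) * ((X v).1 - a.1) + ((X v).2 - a.2) * ((X v).2 - a.2)) @ u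
   --> (((X u).1 - a.1) * ((X u).1 - a.1) + ((X u).2 - a.2) * ((X u).2 - a.2)).
  by apply: cvgD; apply: cvgM; apply: cvgB => //; exact: cvg_cst.
exact: (cvg_comp _ _ inner (@sqrt_continuous R _)).
Qed.

Lemma near_below (R : realType) (f : R -> R) (a b : R) :
  {for a, continuous f} -> f a < b -> exists2 e : R, 0 < e &
  forall x, `|a - x| < e -> f x < b.
Proof.
move=> hf fab.
have N : \forall x \near a, `|f a - f x| < b - f a.
  by move/cvgr_dist_lt : hf; apply; rewrite subr_gt0.
move: N => /nbhs_ballP [e /= e0 he].
exists e => // x ax; have := he x; rewrite /ball /= => /(_ ax).
rewrite ltr_norml => /andP[h1 h2]; lra.
Qed.

Lemma near_above (R : realType) (f : R -> R) (a b : R) :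
  {for a, continuous f} -> b < f a -> exists2 e : R, 0 < e &
  forall x, `|a - x| < e -> b < f x.
Proof.
move=> hf fab.
have N : \forall x \near a, `|f a - f x| < f a - b.
  by move/cvgr_dist_lt : hf; apply; rewrite subr_gt0.
move: N => /nbhs_ballP [e /= e0 he].
exists e => // x ax; have := he x; rewrite /ball /= => /(_ ax).
rewrite ltr_norml => /andP[h1 h2]; lra.
Qed.

Unset Implicit Arguments.

Theorem mainTheorem4
  (R : realType) (m : nat)
  (D0 D : set (R * R))
  (c : 'I_m.+1 -> R -> R * R)            (* B_j = range (c j); B_0 = boundary of D *)
  (nrm : 'I_m.+1 -> R * R -> R * R)      (* unit normal fields n_j *)
  (lp lm : 'I_m.+1 -> R)                 (* switching rates lambda_j^+ , lambda_j^- *)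
  (alpha beta gamma delta : R) (x0 y : R * R) (i : 'I_m.+1)
  (W : R -> R * R)                        (* sample path of the planar Wiener process *)
  (s : 'I_m.+1 -> R -> R)                 (* sample paths of the switching chains s_j *)
  (X : R -> R * R) (L : 'I_m.+1 -> R -> R)
  (mu : 'I_m.+1 -> {measure set R -> \bar R}) (* mu j = the Stieltjes measure dL^(j) *)
  (* ---- domain and barriers ---- *)
  (hD0open : open D0) (hD0bdd : bounded_set D0) (hD : D = closure D0)
  (hDconn : connected D) (hDsc : simply_connected D)
  (hcurves : forall j, smooth_simple_closed_curve (c j))
  (hB0 : range (c ord0) = D `\` D°)
  (hBin : forall j, j != ord0 -> range (c j) `<=` D0)
  (hdisj : forall j k, j != k -> range (c j) `&` range (c k) = set0)
  (hnrm : forall j t,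
     [/\ enorm (nrm j (c j t)) = 1,
         dot (nrm j (c j t)) (vel (c j) t) = 0 &
         exists e : R, 0 < e /\ forall h : R, 0 < h < e ->
           in_bounded_comp (range (c j)) (padd (c j t) (pscale h (nrm j (c j t))))])
  (hnrmcont : forall j, {within range (c j), continuous (nrm j)})
  (hlp : forall j, 0 < lp j) (hlm : forall j, 0 < lm j)
  (* ---- the driving paths ---- *)
  (hWcont : continuous W) (hW0 : W 0 = (0, 0))
  (hsval : forall (j : 'I_m.+1) (t : R), 0 <= t -> s j t = 1 \/ s j t = -1)
  (hsright : forall (j : 'I_m.+1) (t : R), 0 <= t -> s j x @[x --> t^'+] --> s j t)
  (hsleft : forall (j : 'I_m.+1) (t : R), 0 < t -> cvg (s j x @[x --> t^'-]))
  (hs0 : forall t : R, 0 <= t -> s ord0 t = 1)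
  (hsinit : forall j, (pos_side (range (c j)) x0 -> s j 0 = 1) /\
                      (~ pos_side (range (c j)) x0 -> s j 0 = -1))
  (* ---- the snapping-out Brownian motion X with local times L ---- *)
  (hXcont : continuous X) (hXD : forall t : R, 0 <= t -> D (X t))
  (hLcont : forall j, continuous (L j))
  (hL0 : forall j, L j 0 = 0)
  (hLmono : forall (j : 'I_m.+1) (a b : R), 0 <= a -> a <= b -> L j a <= L j b)
  (hmu : forall (j : 'I_m.+1) (a b : R), 0 <= a -> a <= b -> mu j [set` `]a, b]] = (L j b - L j a)%:E)
  (hSDE : forall t : R, 0 <= t ->
     X t = padd x0 (padd (W t)
       ( \sum_(j < m.+1) \int[mu j]_(r in [set` `]0, t]])
            (s j (L j r) * ind (range (c j)) (X r) * (nrm j (X r)).1),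
         \sum_(j < m.+1) \int[mu j]_(r in [set` `]0, t]])
            (s j (L j r) * ind (range (c j)) (X r) * (nrm j (X r)).2))))
  (hLsupp : forall (j : 'I_m.+1) (t : R), 0 <= t ->
     L j t = \int[mu j]_(r in [set` `]0, t]]) ind (range (c j)) (X r))
  (hsides : forall (j : 'I_m.+1) (t : R), 0 <= t ->
     (s j (L j t) = 1 -> pos_side (range (c j)) (X t)) /\
     (s j (L j t) = -1 -> neg_side (range (c j)) (X t)))
  (* ---- hypotheses of the statement ---- *)
  (halpha : 0 < alpha) (hbeta : 0 < beta) (hgamma : 0 < gamma)
  (hgamma5 : gamma < 5^-1) (hdelta : 0 < delta) (hdelta2 : delta < 2^-1)
  (hx0 : calD c D lp lm delta x0) (hy : calD c D lp lm delta y)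
  (hx0y : enorm (psub x0 y) <= 4 / 5 * r_delta c D lp lm delta)
  (hi : i != ord0)
  (hdiff : (pos_side (range (c i)) x0 /\ ~ pos_side (range (c i)) y) \/
           (~ pos_side (range (c i)) x0 /\ pos_side (range (c i)) y))
  (* ---- the event A ---- *)
  (hA1 : (E1 (s i) < (alpha * r_delta c D lp lm delta)%:E)%E)
  (hA2 : (E2 (s i) > (beta * r_delta c D lp lm delta)%:E)%E)
  (hA3 : forall t : R, 0 <= t <= r_delta c D lp lm delta ^+ 2 ->
     enorm (psub (W t) (pscale (t / r_delta c D lp lm delta ^+ 2) (psub y x0)))
       <= gamma * r_delta c D lp lm delta) :
  forall t : R, 0 <= t <= r_delta c D lp lm delta ^+ 2 ->
    L i t < (5^-1 - gamma) * r_delta c D lp lm delta ->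
    eball x0 (r_delta c D lp lm delta) (X t).

Proof.
move=> t /andP[t0 tr] hLt.
set r := r_delta c D lp lm delta.
have hx0D : D x0 := hx0.1.
have barr : forall j z, range (c j) z -> all_barriers c z.
  by move=> j z hz; exists j.
have farx0 : forall z, range (c i) z -> r / 5 <= enorm (psub x0 z).
  by move=> z hz; apply: hx0.2; exact: barr hz.
have fary : forall z, range (c i) z -> r / 5 <= enorm (psub y z).
  by move=> z hz; apply: hy.2; exact: barr hz.
have r0 : 0 < r.
  rewrite ltNge; apply/negP => rle.
  have : enorm (psub x0 y) <= 0 by apply: (le_trans hx0y); apply: mulr_ge0_le0.
  move=> h; have e0 : enorm (psub x0 y) = 0 by apply/eqP; rewrite eq_le h enorm_ge0.
  have [h1 h2] := enorm_eq0 e0.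
  have exy : x0 = y.
    rewrite [x0]surjective_pairing [y]surjective_pairing.
    by congr pair; apply/eqP; rewrite -subr_eq0; apply/eqP.
  by rewrite exy in hdiff; tauto.
have r5 : 0 < r / 5 by rewrite divr_gt0.
have hp : exists p, range (c i) p /\ enorm (psub p x0) <= 4 / 5 * r.
  case: hdiff => [[px0 npy]|[npx0 py]].
    have [l [/andP[l0 l1] Bl]] := crossing r5 farx0 fary px0 npy.
    exists (seg x0 y l); split => //.
    rewrite seg_dist enorm_scale ger0_norm // enorm_psubC.
    apply: le_trans hx0y; rewrite -[X in _ <= X]mul1r; apply: ler_wpM2r => //.
    exact: enorm_ge0.
  have [l [/andP[l0 l1] Bl]] := crossing r5 fary farx0 py npx0.
  exists (seg y x0 l); split => //.
  rewrite seg_dist2 enorm_scale ger0_norm ?subr_ge0 // enorm_psubC.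
  apply: le_trans hx0y; rewrite -[X in _ <= X]mul1r; apply: ler_wpM2r.
    exact: enorm_ge0.
  lra.
have [p [Bp px0]] := hp.
set S := [set r0 | 0 <= r0 /\ forall r' x, r' <= r0 -> D x ->
             connected (eball x r' `&` all_barriers c)].
have rS : 2 * r < sup S.
  have mn0 : 0 < Num.min (kappa c)^-1 (Num.min (lambda_max lp lm)^-1 (rho c D)).
    by move: r0; rewrite /r /r_delta pmulr_rgt0.
  have mnr : Num.min (kappa c)^-1 (Num.min (lambda_max lp lm)^-1 (rho c D)) <= rho c D.
    by rewrite !ge_min lexx !orbT.
  have : r <= delta * rho c D by rewrite /r /r_delta ler_wpM2l // ltW.
  have rho0 : 0 < rho c D := lt_le_trans mn0 mnr.
  rewrite /rho -/S => h.
  have : delta * sup S < 2^-1 * sup S by rewrite ltr_pM2r // -/(rho c D).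
  lra.
have [e Se eS] : exists2 e, S e & 2 * r < e.
  have hs : has_sup S.
    apply/not_notP => ns; move: rS; rewrite (sup_out ns); lra.
  have eps0 : 0 < sup S - 2 * r by lra.
  have [e Se he] := sup_adherent eps0 hs.
  by exists e => //; lra.
have cK : connected (eball x0 (2 * r) `&` all_barriers c).
  by apply: Se.2 => //; exact: ltW.
have KB : eball x0 (2 * r) `&` all_barriers c `<=` range (c i).
  apply: (@conn_in_one R m.+1 (fun j => range (c j)) _ i cK).
  - by move=> z [_ hz].
  - by move=> j; apply: range_closed.
  - exact: hdisj.
  - exists p; split => //; split; last exact: barr Bp.
    rewrite /eball /=; lra.
have hnot : forall u, enorm (psub (X u) x0) < 2 * r ->
    forall j, j != i -> ~ range (c j) (X u).
  move=> u hu j ji hj.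
  have Bi : range (c i) (X u) by apply: KB; split => //; exact: barr hj.
  by have := hdisj _ _ ji; move/seteqP => [+ _] => /(_ (X u)) /=; apply.
have key : forall tau, 0 <= tau <= t ->
    (forall u, 0 < u <= tau -> enorm (psub (X u) x0) < 2 * r) ->
    enorm (psub (X tau) x0) < r.
  move=> tau /andP[tau0 taut] hin.
  set Dt := [set` `]0, tau]] : set R.
  have mDt : measurable Dt := measurable_itv _.
  have Dtin : forall u, Dt u -> 0 < u <= tau by move=> u; rewrite /Dt /= in_itv.
  have ind0 : forall j u, j != i -> Dt u -> ind (range (c j)) (X u) = 0.
    move=> j u ji Du; rewrite /ind; case: asboolP => // hj.
    by exfalso; apply: (hnot u _ j ji hj); apply: hin; apply: Dtin.
  have z1 : forall j, j != i -> \int[mu j]_(u in Dt)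
      (s j (L j u) * ind (range (c j)) (X u) * (nrm j (X u)).1) = 0.
    move=> j ji; rewrite (@eq_Rintegral _ _ _ _ _ (fun=> 0)).
      by rewrite Rintegral_cst // mul0r.
    by move=> u /set_mem Du; rewrite ind0 // mulr0 mul0r.
  have z2 : forall j, j != i -> \int[mu j]_(u in Dt)
      (s j (L j u) * ind (range (c j)) (X u) * (nrm j (X u)).2) = 0.
    move=> j ji; rewrite (@eq_Rintegral _ _ _ _ _ (fun=> 0)).
      by rewrite Rintegral_cst // mul0r.
    by move=> u /set_mem Du; rewrite ind0 // mulr0 mul0r.
  have hX := hSDE tau tau0.
  rewrite (bigD1 i) //= big1 ?addr0 in hX; last by move=> j ji; exact: z1.
  rewrite (bigD1 i) //= big1 ?addr0 in hX; last by move=> j ji; exact: z2.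
  set I1 := \int[mu i]_(u in Dt) _ in hX.
  set I2 := \int[mu i]_(u in Dt) _ in hX.
  have eX : psub (X tau) x0 = padd (W tau) (I1, I2).
    rewrite hX /psub /padd /=; congr pair; ring.
  set q := pscale (tau / r ^+ 2) (psub y x0).
  have eW : W tau = padd (psub (W tau) q) q.
    rewrite /psub /padd /=; rewrite [LHS]surjective_pairing; congr pair; ring.
  have hq : enorm q <= 4 / 5 * r.
    rewrite /q enorm_scale ger0_norm ?divr_ge0 ?sqr_ge0 // enorm_psubC.
    apply: le_trans hx0y; rewrite -[X in _ <= X]mul1r; apply: ler_wpM2r.
      exact: enorm_ge0.
    rewrite ler_pdivrMr ?exprn_gt0 // mul1r; exact: le_trans taut tr.
  have hW : enorm (W tau) <= gamma * r + 4 / 5 * r.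
    rewrite eW; apply: (le_trans (enorm_triangle _ _)); apply: lerD => //.
    by apply: hA3; rewrite tau0 (le_trans taut tr).
  have L0 : forall u, Dt u -> 0 <= L i u.
    move=> u /Dtin /andP[u0 _]; rewrite -(hL0 i); apply: hLmono => //; exact: ltW.
  have Lmono : forall u v, Dt u -> Dt v -> u <= v -> L i u <= L i v.
    by move=> u v /Dtin /andP[u0 _] _ uv; apply: hLmono => //; exact: ltW.
  have ms := sL_meas mDt (@interval_is_interval R _) L0 Lmono (hsval i) (hsright i).
  have cfst : continuous (fun v : R * R => v.1) by move=> v; exact: cvg_fst.
  have csnd : continuous (fun v : R * R => v.2) by move=> v; exact: cvg_snd.
  have mk1 := k_meas mDt hXcont (range_closed (hcurves i)) cfst (hnrmcont i).
  have mk2 := k_meas mDt hXcont (range_closed (hcurves i)) csnd (hnrmcont i).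
  have m1 := measurable_realfun.measurable_funM ms mk1.
  have m2 := measurable_realfun.measurable_funM ms mk2.
  have hb : forall u, Dt u -> enorm (s i (L i u) * ind (range (c i)) (X u) * (nrm i (X u)).1,
                                    s i (L i u) * ind (range (c i)) (X u) * (nrm i (X u)).2) <= 1.
    move=> u Du; rewrite -/(pscale _ (nrm i (X u))) enorm_scale /ind.
    case: asboolP => [[t' _ ht']|_]; last by rewrite mulr0 normr0 mul0r ler01.
    rewrite -ht' mulr1; have [h1 _ _] := hnrm i t'; rewrite h1 mulr1.
    by have [->|->] := hsval i _ (L0 u Du); rewrite ?normrN normr1.
  have m1' : measurable_fun Dt (fun u => s i (L i u) * ind (range (c i)) (X u) * (nrm i (X u)).1).
    by apply: eq_measurable_fun m1 => u _ /=; rewrite mulrA.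
  have m2' : measurable_fun Dt (fun u => s i (L i u) * ind (range (c i)) (X u) * (nrm i (X u)).2).
    by apply: eq_measurable_fun m2 => u _ /=; rewrite mulrA.
  have hint := int_bound (mu := mu i) (M := L i tau) mDt _ m1' m2' hb.
  rewrite hmu // hL0 subr0 in hint.
  have := hint erefl => hI.
  have Lt : L i tau <= L i t by apply: hLmono.
  rewrite eX; apply: (le_lt_trans (enorm_triangle _ _)).
  move: hI; rewrite -/I1 -/I2 => hI.
  have e5 : (5^-1 - gamma) * r + 4 / 5 * r + gamma * r = r.
    by field.
  move: hW hI Lt hLt e5.
  set A := (5^-1 - gamma) * r; set B := 4 / 5 * r; set C := gamma * r.
  move=> *; lra.
have cphi := phi_cont (a := x0) hXcont.
have main : forall u, 0 <= u <= t -> enorm (psub (X u) x0) < r.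
  move=> u0 /andP[u00 u0t]; rewrite ltNge; apply/negP => hge.
  set F := [set u | 0 <= u <= t /\ r <= enorm (psub (X u) x0)].
  have F0 : F u0 by split => //; rewrite u00 u0t.
  have lbF : lbound F 0 by move=> u [/andP[]].
  have hlb : has_lbound F by exists 0.
  have hinf : has_inf F by split => //; exists u0.
  set tau := inf F.
  have tau0 : 0 <= tau by apply: lb_le_inf => //; exists u0.
  have tauu : forall u, F u -> tau <= u by move=> u Fu; exact: ge_inf.
  have taut : tau <= t by apply: (le_trans (tauu _ F0)).
  have below : forall u, 0 <= u < tau -> enorm (psub (X u) x0) < r.
    move=> u /andP[uu0 ut]; rewrite ltNge; apply/negP => hu.
    have : tau <= u by apply: tauu; split => //; rewrite uu0 /= (le_trans (ltW ut)).
    by rewrite leNgt ut.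
  have atau : r <= enorm (psub (X tau) x0).
    rewrite leNgt; apply/negP => hlt.
    have [ep ep0 hep] := near_below (cphi tau) hlt.
    have [e' Fe' he'] := inf_adherent ep0 hinf.
    have := tauu _ Fe' => te.
    have : enorm (psub (X e') x0) < r by apply: hep; rewrite distrC ger0_norm ?subr_ge0 //; lra.
    by case: Fe' => _ h; rewrite ltNge h.
  have le2r : forall u, 0 < u <= tau -> enorm (psub (X u) x0) < 2 * r.
    move=> u /andP[uu0 ut].
    have [ut'|ue] := ltP u tau.
      by apply: (lt_trans (below u _)); [rewrite ut' ltW | lra].
    have eu : u = tau by apply/eqP; rewrite eq_le ut ue.
    subst u.
    suff : enorm (psub (X tau) x0) <= r by lra.
    rewrite leNgt; apply/negP => hlt.
    have [ep ep0 hep] := near_above (cphi tau) hlt.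
    set d := Num.min tau ep.
    have d0 : 0 < d by rewrite lt_min uu0 ep0.
    have dt : d <= tau by rewrite ge_min lexx.
    have de : d <= ep by rewrite ge_min lexx orbT.
    have := below (tau - d / 2); rewrite (_ : 0 <= tau - d / 2 < tau); last first.
      by apply/andP; split; lra.
    move=> /(_ isT) hb.
    have : r < enorm (psub (X (tau - d / 2)) x0).
      by apply: hep; rewrite ger0_norm; lra.
    lra.
  have := key tau _ le2r; rewrite tau0 taut => /(_ isT); lra.
by have := main t; rewrite t0 lexx => /(_ isT).
Qed.
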